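(* Let $\overrightarrow{W}$ be a Morse sequence on a simplicial complex $K$, with reference map $\curlywedge$ and coreference map $\curlyvee$. (1) If $z,z'\in Z_p(K)$ and $\curlywedge(z)=\curlywedge(z')$, then $z+z'\in B_p(K)$, i.e. $z$ and $z'$ are homologous. (2) If $z,z'\in Z^p(K)$ and $\curlyvee(z)=\curlyvee(z')$, then $z+z'\in B^p(K)$, i.e. $z$ and $z'$ are cohomologous.
   Context: A simplicial complex $K$ is a finite collection of non-empty finite sets closed under taking non-empty subsets; $\dim\sigma=|\sigma|-1$, $K^{(p)}$ the set of $p$-simplices. A pair $(\sigma,\tau)$ with $\sigma\subsetneq\tau$ is a free pair for $K$ if $\tau$ is the only simplex other than $\sigma$ containing $\sigma$; $K$ is then an elementary expansion of $K\setminus\{\sigma,\tau\}$. If $\nu$ is a facet (maximal simplex) of $K$, $K$ is an elementary filling of $K\setminus\{\nu\}$. A Morse sequence on $K$ is a sequence $\langle\emptyset=K_0,\dots,K_k=K\rangle$ with each $K_i$ an elementary expansion or filling of $K_{i-1}$; simplices added by fillings are critical; for an expansion $K_i=K_{i-1}\cup\{\sigma,\tau\}$, $\sigma\subset\tau$, $\sigma$ is lower regular and $\tau$ upper regular. $K[p]$ is the $\mathbb{Z}_2$-vector space of subsets of $K^{(p)}$ (sum = symmetric difference, $0=\emptyset$). For $\sigma\in K^{(p)}$, $\partial(\sigma)=\{\tau\in K^{(p-1)}:\tau\subset\sigma\}$, $\delta(\sigma)=\{\tau\in K^{(p+1)}:\sigma\subset\tau\}$, extended linearly to $\partial_p:K[p]\to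 K[p-1]$, $\delta_p:K[p]\to K[p+1]$; $Z_p(K)=\ker\partial_p$, $B_p(K)=\operatorname{im}\partial_{p+1}$, $Z^p(K)=\ker\delta_p$, $B^p(K)=\operatorname{im}\delta_{p-1}$. The reference map $\curlywedge$ is the unique map assigning to each $p$-simplex a set of critical $p$-simplices, extended linearly (mod 2), with $\curlywedge(\nu)=\{\nu\}$ for critical $\nu$ and $\curlywedge(\tau)=0=\curlywedge(\partial(\tau))$ for upper regular $\tau$; the coreference map $\curlyvee$ is the unique such map with $\curlyvee(\nu)=\{\nu\}$ for critical $\nu$ and $\curlyvee(\sigma)=0=\curlyvee(\delta(\sigma))$ for lower regular $\sigma$. *)

(* Defs.v *)
From mathcomp Require Import all_boot.
Set Implicit Arguments. Unset Strict Implicit. Unset Printing Implicit Defensive.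

Section Defs.
Variable V : finType.
Implicit Types (K c : {set {set V}}) (s t nu : {set V}).

Definition is_complex K : Prop :=
  set0 \notin K /\
  forall s t, s \in K -> t \subset s -> t != set0 -> t \in K.

Definition Ksize K n : {set {set V}} := [set s in K | #|s| == n].
Definition Kdim K p : {set {set V}} := Ksize K p.+1.

(* mod-2 linear extension of F : simplex -> set of simplices, applied to the
   chain c (a set of simplices): x is in the result iff it occurs in an odd
   number of the F s, s in c  (i.e. the Z_2 sum of the F s). *)
Definition lin (F : {set V} -> {set {set V}}) c : {set {set V}} :=
  [set x | odd #|[set s in c | x \in F s]|].

Definition bd1 K s : {set {set V}} := [set t in K | (t \subset s) && (#|t| == #|s| - 1)].
Definition cobd1 K s : {set {set V}} := [set t in K | (s \subset t) && (#|t| == #|s|.+1)].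
Definition bd K c := lin (bd1 K) c.
Definition cobd K c := lin (cobd1 K) c.

Definition chain_add c c' : {set {set V}} := (c :\: c') :|: (c' :\: c).

Definition Zp K p c : Prop := c \subset Kdim K p /\ bd K c = set0.
Definition Bp K p c : Prop := c \subset Kdim K p /\
  exists d : {set {set V}}, d \subset Kdim K p.+1 /\ bd K d = c.
Definition coZp K p c : Prop := c \subset Kdim K p /\ cobd K c = set0.
(* B^p = im delta_{p-1}; the (p-1)-simplices are those with p vertices
   (none when p = 0, so B^0 = 0) *)
Definition coBp K p c : Prop := c \subset Kdim K p /\
  exists d : {set {set V}}, d \subset Ksize K p /\ cobd K d = c.

(* A step of a Morse sequence: filling by nu (inl nu) or expansion by a
   pair (sigma, tau) (inr (sigma, tau)). *)
Definition step := ({set V} + ({set V} * {set V}))%type.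
Definition added (x : step) : {set {set V}} :=
  match x with inl nu => [set nu] | inr (s, t) => [set s; t] end.
Definition Kpref (W : seq step) (i : nat) : {set {set V}} :=
  \bigcup_(x <- take i W) added x.

Definition facet K nu : Prop := nu \in K /\ forall t, t \in K -> nu \subset t -> t = nu.
Definition free_pair K s t : Prop :=
  s \proper t /\ s \in K /\ t \in K /\
  forall u, u \in K -> s \subset u -> u = s \/ u = t.

Definition Morse_seq (W : seq step) K : Prop :=
  Kpref W (size W) = K /\
  forall i, i < size W ->
    let Kp := Kpref W i in let Kn := Kpref W i.+1 in
    is_complex Kn /\
    match nth (inl set0) W i with
    | inl nu => facet Kn nu /\ Kp = Kn :\ nu
    | inr (s, t) => free_pair Kn s t /\ Kp = Kn :\: [set s; t]
    end.

Definition critical (W : seq step) nu : bool := inl nu \in W.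
Definition lower_regular (W : seq step) s : bool := [exists t, inr (s, t) \in W].
Definition upper_regular (W : seq step) t : bool := [exists s, inr (s, t) \in W].

Definition is_reference (W : seq step) K (ref : {set V} -> {set {set V}}) : Prop :=
  (forall s, s \in K -> ref s \subset [set nu in Ksize K #|s| | critical W nu]) /\
  (forall nu, nu \in K -> critical W nu -> ref nu = [set nu]) /\
  (forall t, t \in K -> upper_regular W t -> ref t = set0 /\ lin ref (bd1 K t) = set0).

Definition is_coreference (W : seq step) K (coref : {set V} -> {set {set V}}) : Prop :=
  (forall s, s \in K -> coref s \subset [set nu in Ksize K #|s| | critical W nu]) /\
  (forall nu, nu \in K -> critical W nu -> coref nu = [set nu]) /\
  (forall s, s \in K -> lower_regular W s -> coref s = set0 /\ lin coref (cobd1 K s) = set0).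

End Defs.

(* Main.v *)
Require Import Defs.
From mathcomp Require Import all_boot.
From mathcomp Require Import zify.
Set Implicit Arguments. Unset Strict Implicit.

Section Generic.
Variable V0 : finType. Local Notation T := {set V0}.

Lemma mem_chain_add (c c' : {set T}) x :
  (x \in chain_add c c') = (x \in c) (+) (x \in c').
Proof. by rewrite /chain_add !inE; case: (x \in c); case: (x \in c'). Qed.

Lemma odd_card_add (X Y : {set T}) :
  odd #|chain_add X Y| = odd #|X| (+) odd #|Y|.
Proof.
have e0 : (X :\: Y) :&: (Y :\: X) = set0.
  by apply/setP => x; rewrite !inE; case: (x \in X); case: (x \in Y).
have e1 : #|chain_add X Y| = #|X :\: Y| + #|Y :\: X|.
  by rewrite /chain_add cardsU e0 cards0 subn0.
rewrite -(cardsID Y X) -(cardsID X Y) (setIC Y X) e1 !oddD.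
by case: (odd #|X :&: Y|); case: (odd #|X :\: Y|); case: (odd #|Y :\: X|).
Qed.

Lemma chain_add0 (a b : {set T}) : chain_add a b = set0 -> a = b.
Proof.
move=> /setP H; apply/setP => x; move: (H x); rewrite mem_chain_add inE.
by case: (x \in a); case: (x \in b).
Qed.

Lemma chain_addK (a b : {set T}) : chain_add (chain_add a b) b = a.
Proof.
apply/setP => x; rewrite !mem_chain_add.
by case: (x \in a); case: (x \in b).
Qed.

Lemma chain_add1D s (B : {set T}) : s \in B -> chain_add [set s] (B :\ s) = B.
Proof.
move=> sB; apply/setP => x; rewrite mem_chain_add !inE.
by case: (x =P s) => [->|]; rewrite ?sB.
Qed.

Lemma chain_add_sub (a b A : {set T}) :
  a \subset A -> b \subset A -> chain_add a b \subset A.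
Proof.
move=> aA bA; rewrite /chain_add subUset.
by rewrite (subset_trans (subsetDl _ _) aA) (subset_trans (subsetDl _ _) bA).
Qed.
End Generic.

Section Lin.
Variable V : finType.
Implicit Types (F : {set V} -> {set {set V}}) (a b c : {set {set V}}).

Lemma lin_add F a b : lin F (chain_add a b) = chain_add (lin F a) (lin F b).
Proof.
apply/setP => x; rewrite mem_chain_add !inE.
have -> : [set s in chain_add a b | x \in F s] =
  chain_add [set s in a | x \in F s] [set s in b | x \in F s].
  apply/setP => s; rewrite /chain_add !inE.
  by case: (x \in F s); case: (s \in a); case: (s \in b).
exact: odd_card_add.
Qed.

Lemma lin1 F s : lin F [set s] = F s.
Proof.
apply/setP => x; rewrite inE.
case: (boolP (x \in F s)) => h.
  have -> : [set t in [set s] | x \in F t] = [set s].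
    by apply/setP => t; rewrite !inE; case: eqP => // ->; rewrite h.
  by rewrite cards1.
have -> : [set t in [set s] | x \in F t] = set0.
  by apply/setP => t; rewrite !inE; case: eqP => // ->; rewrite (negbTE h).
by rewrite cards0.
Qed.

Lemma lin0 F : lin F set0 = set0.
Proof.
apply/setP => x; rewrite !inE.
have -> : [set t in (set0 : {set {set V}}) | x \in F t] = set0.
  by apply/setP => t; rewrite !inE.
by rewrite cards0.
Qed.

Lemma lin_sub F c (A : {set {set V}}) :
  (forall s, s \in c -> F s \subset A) -> lin F c \subset A.
Proof.
move=> hF; apply/subsetP => x; rewrite inE => H.
have : [set s in c | x \in F s] != set0.
  by apply: contraTneq H => ->; rewrite cards0.
case/set0Pn => s; rewrite inE => /andP[sc xF].
exact: (subsetP (hF s sc)).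
Qed.

Lemma interval2 (x t : {set V}) : x \subset t -> #|t| = (#|x|).+2 ->
  #|[set u : {set V} | [&& x \subset u, u \subset t & #|u| == #|x|.+1]]| = 2.
Proof.
move=> xt ct.
have -> : [set u : {set V} | [&& x \subset u, u \subset t & #|u| == #|x|.+1]]
    = (fun a : V => a |: x) @: (t :\: x).
  apply/setP => u; rewrite inE; apply/and3P/imsetP.
  - case => xu ut /eqP cu.
    have : x \proper u by rewrite properEcard xu cu ltnSn.
    case/properP => _ [a au ax].
    exists a; first by rewrite inE ax (subsetP ut).
    apply/eqP; rewrite eq_sym eqEcard subUset sub1set au xu /= cardsU1 ax cu.
    by [].
  - case => a; rewrite inE => /andP[ax at'] ->.
    by rewrite subsetUr subUset sub1set at' xt cardsU1 ax.
rewrite card_in_imset.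
  by rewrite cardsD (setIidPr xt); lia.
move=> a b; rewrite !inE => /andP[ax _] /andP[bx _] e.
have : a \in b |: x by rewrite -e setU11.
by rewrite in_setU1 (negbTE ax) orbF => /eqP.
Qed.

Lemma complex_nonempty (K : {set {set V}}) (s : {set V}) : is_complex K -> s \in K -> 0 < #|s|.
Proof.
case=> h0 _ sK; rewrite card_gt0; apply: contraNneq h0 => <-; exact: sK.
Qed.

Lemma bdbd (K : {set {set V}}) (t : {set V}) : is_complex K -> t \in K -> bd K (bd1 K t) = set0.
Proof.
move=> HK tK; apply/setP => x; rewrite !inE.
set S := [set s in bd1 K t | x \in bd1 K s].
have [->|[t0 Ht0]] := set_0Vmem S; first by rewrite cards0.
move: (Ht0); rewrite !inE => /andP[/and3P[t0K t0t /eqP ct0] /and3P[xK xt0 /eqP cx]].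
have px := complex_nonempty HK xK.
have -> : S = [set u : {set V} | [&& x \subset u, u \subset t & #|u| == #|x|.+1]].
  apply/setP => u; rewrite !inE; apply/idP/idP.
  - by case/andP => /and3P[uK ut /eqP cu] /and3P[_ xu /eqP cxu];
       rewrite xu ut /=; apply/eqP; lia.
  - case/and3P => xu ut /eqP cu.
    have uK : u \in K.
      case: HK => _ HK; apply: HK tK ut _.
      by rewrite -card_gt0 cu.
    rewrite uK ut xK xu /=; apply/andP; split; apply/eqP; lia.
by rewrite interval2 //; [exact: subset_trans xt0 t0t | lia].
Qed.

Lemma cobdcobd (K : {set {set V}}) (s : {set V}) : is_complex K -> cobd K (cobd1 K s) = set0.
Proof.
move=> HK; apply/setP => x; rewrite !inE.
set S := [set u in cobd1 K s | x \in cobd1 K u].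
have [->|[t0 Ht0]] := set_0Vmem S; first by rewrite cards0.
move: (Ht0); rewrite !inE => /andP[/and3P[t0K st0 /eqP ct0] /and3P[xK t0x /eqP cx]].
have -> : S = [set u : {set V} | [&& s \subset u, u \subset x & #|u| == #|s|.+1]].
  apply/setP => u; rewrite !inE; apply/idP/idP.
  - by case/andP => /and3P[uK su /eqP cu] /and3P[_ ux /eqP cxu];
       rewrite su ux /=; apply/eqP; lia.
  - case/and3P => su ux /eqP cu.
    have uK : u \in K.
      case: HK => _ HK; apply: HK xK ux _.
      by rewrite -card_gt0 cu.
    rewrite uK ux xK su /=; apply/andP; split; apply/eqP; lia.
by rewrite interval2 //; [exact: subset_trans st0 t0x | lia].
Qed.
End Lin.

Lemma chain_addxx (V : finType) (a : {set {set V}}) : chain_add a a = set0.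
Proof. by apply/setP => x; rewrite mem_chain_add inE addbb. Qed.

Section Morse.
Variables (V : finType) (K : {set {set V}}) (W : seq (step V)).
Hypothesis HK : is_complex K.
Hypothesis HM : Morse_seq W K.

Local Notation KP := (Kpref W).
Local Notation n := (size W).

Lemma KP0 : KP 0 = set0.
Proof. by rewrite /Kpref take0 big_nil. Qed.

Lemma KPn : KP n = K.
Proof. by case: HM. Qed.

Lemma KP_step i : i < n -> is_complex (KP i.+1) /\
    match nth (inl set0) W i with
    | inl nu => facet (KP i.+1) nu /\ KP i = KP i.+1 :\ nu
    | inr (s, t) => free_pair (KP i.+1) s t /\ KP i = KP i.+1 :\: [set s; t]
    end.
Proof. by case: HM => _ H; exact: H. Qed.

Lemma KP_mono i : i < n -> KP i \subset KP i.+1.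
Proof.
move=> lt; have [_] := KP_step lt.
by case: nth => [nu [_ ->]|[s t] [_ ->]]; exact: subsetDl.
Qed.

Lemma KP_sub i : i <= n -> KP i \subset K.
Proof.
move=> le; rewrite -KPn; move: (subnK le); move: (n - i) => d.
elim: d i {le} => [|d IH] i; first by rewrite add0n => ->.
move=> e; have lt : i < n by rewrite -e; lia.
apply: subset_trans (KP_mono lt) (IH i.+1 _); lia.
Qed.

Lemma fill_facts i nu : i < n -> nth (inl set0) W i = inl nu ->
  [/\ nu \in KP i.+1, nu \in K, critical W nu & KP i = KP i.+1 :\ nu].
Proof.
move=> lt e; have [_] := KP_step lt; rewrite e => -[[nuK _] E].
split => //; first exact: (subsetP (KP_sub lt)).
by rewrite /critical -e mem_nth.
Qed.

Lemma exp_facts i s t : i < n -> nth (inl set0) W i = inr (s, t) ->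
 [/\ s \in KP i.+1, t \in KP i.+1, s \in K, t \in K &
  [/\ s \subset t, #|t| = #|s|.+1, inr (s, t) \in W, KP i = KP i.+1 :\: [set s; t] &
   forall u, u \in KP i.+1 -> s \subset u -> u = s \/ u = t]].
Proof.
move=> lt e; have [Hc] := KP_step lt; rewrite e => -[[st [sK [tK fr]]] E].
have st' := st; case/properP: st' => sst [x xt xs].
have ct : #|t| = #|s|.+1.
  have uK : x |: s \in KP i.+1.
    case: Hc => _ Hc; apply: Hc tK _ _.
      by rewrite subUset sub1set xt sst.
    by apply/set0Pn; exists x; rewrite setU11.
  case: (fr _ uK (subsetUr _ _)) => eu.
    by move: xs; rewrite -eu setU11.
  by rewrite -eu cardsU1 xs.
split => //; try exact: (subsetP (KP_sub lt)).
by split => //; rewrite -e mem_nth.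
Qed.

Lemma bd1_in i a b u : i < n -> nth (inl set0) W i = inr (a, b) ->
  u \in bd1 K b -> u != a -> u \in KP i.
Proof.
move=> lt e; case: (exp_facts lt e) => aKn bKn aK bK [ab cb inW EK fr].
rewrite !inE => /and3P[uK ub /eqP cu] ua.
have [Hc _] := KP_step lt.
have uKn : u \in KP i.+1.
  case: Hc => _ Hc; apply: Hc bKn ub _.
  by rewrite -card_gt0; have := complex_nonempty HK uK; lia.
rewrite EK !inE uKn (negbTE ua) /= andbT.
by apply/eqP => ebu; move: cu; rewrite ebu; lia.
Qed.

Lemma cobd1_in i a b u : i < n -> nth (inl set0) W i = inr (a, b) ->
  u \in cobd1 K a -> u != b -> u \notin KP i.+1.
Proof.
move=> lt e; case: (exp_facts lt e) => aKn bKn aK bK [ab cb inW EK fr].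
rewrite !inE => /and3P[uK au /eqP cu] ub.
apply/negP => uKn; case: (fr u uKn au) => eu.
  by move: cu; rewrite eu; lia.
by rewrite eu eqxx in ub.
Qed.

Lemma ref_sub ref : is_reference W K ref ->
  forall i, i <= n -> forall s, s \in KP i -> ref s \subset KP i.
Proof.
move=> [_ [Hc Hu]]; elim=> [|i IH] lei s; first by rewrite KP0 inE.
have lt : i < n := lei; have mono := KP_mono lt.
case: (boolP (s \in KP i)) => [sKi _|sKi sKn].
  exact: subset_trans (IH (ltnW lt) s sKi) mono.
case E: (nth (inl set0) W i) => [nu|[a b]].
  case: (fill_facts lt E) => nuKn nuK crit EK.
  have -> : s = nu.
    by move: sKi; rewrite EK !inE sKn andbT negbK => /eqP.
  by rewrite (Hc nu nuK crit) sub1set.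
case: (exp_facts lt E) => aKn bKn aK bK [ab cb inW EK fr].
have upb : upper_regular W b by apply/existsP; exists a.
have : (s == a) || (s == b).
  by move: sKi; rewrite EK !inE sKn andbT negbK.
case/orP => /eqP ->.
  have [_ H0] := Hu b bK upb.
  have hb : a \in bd1 K b by rewrite !inE aK ab /=; apply/eqP; lia.
  rewrite -(chain_add1D hb) lin_add lin1 in H0.
  rewrite (chain_add0 H0); apply: lin_sub => u; rewrite in_setD1 => /andP[ua ub].
  exact: subset_trans (IH (ltnW lt) u (bd1_in lt E ub ua)) mono.
by rewrite (Hu b bK upb).1 sub0set.
Qed.

Definition L j := K :\: KP j.

Lemma L_mono j : j < n -> L j.+1 \subset L j.
Proof. by move=> lt; apply: setDS; exact: KP_mono. Qed.

Lemma coref_sub coref : is_coreference W K coref ->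
  forall k j, j + k = n -> forall s, s \in L j -> coref s \subset L j.
Proof.
move=> [_ [Hc Hu]]; elim=> [|k IH] j ejk s.
  by rewrite addn0 in ejk; rewrite /L ejk KPn setDv inE.
have lt : j < n by lia.
have IH' := IH j.+1 (etrans (addSnnS j k) ejk).
rewrite /L inE => /andP[sKj sK].
case: (boolP (s \in KP j.+1)) => sKn; last first.
  apply: subset_trans (IH' s _) (L_mono lt); by rewrite inE sKn sK.
case E: (nth (inl set0) W j) => [nu|[a b]].
  case: (fill_facts lt E) => nuKn nuK crit EK.
  have esn : s = nu.
    by move: sKj; rewrite EK !inE sKn andbT negbK => /eqP.
  rewrite esn (Hc nu nuK crit) sub1set inE nuK andbT.
  by rewrite -esn.
case: (exp_facts lt E) => aKn bKn aK bK [ab cb inW EK fr].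
have lowa : lower_regular W a by apply/existsP; exists b.
have : (s == a) || (s == b).
  by move: sKj; rewrite EK !inE sKn andbT negbK.
case/orP => /eqP ->; first by rewrite (Hu a aK lowa).1 sub0set.
have [_ H0] := Hu a aK lowa.
have hb : b \in cobd1 K a by rewrite !inE bK ab /=; apply/eqP; lia.
rewrite -(chain_add1D hb) lin_add lin1 in H0.
rewrite (chain_add0 H0); apply: lin_sub => u; rewrite in_setD1 => /andP[ub ua].
have uL : u \in L j.+1.
  by rewrite inE (cobd1_in lt E ua ub); move: ua; rewrite inE => /andP[->].
exact: subset_trans (IH' u uL) (L_mono lt).
Qed.

End Morse.

Section Main.
Variables (V : finType) (K : {set {set V}}) (W : seq (step V)).
Hypothesis HK : is_complex K.
Hypothesis HM : Morse_seq W K.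

Local Notation KP := (Kpref W).
Local Notation n := (size W).

Lemma chain_add00 : chain_add (set0 : {set {set V}}) set0 = set0.
Proof. exact: chain_addxx. Qed.

Lemma hom_main ref p : is_reference W K ref ->
  forall i, i <= n -> forall c : {set {set V}}, c \subset KP i -> c \subset Kdim K p ->
  bd K c = set0 -> lin ref c = set0 ->
  exists d : {set {set V}}, [/\ d \subset KP i, d \subset Kdim K p.+1 & bd K d = c].
Proof.
move=> Href; have [_ [Hc Hu]] := Href.
elim=> [|i IH] lei c cKi cdim cbd cref.
  rewrite KP0 subset0 in cKi; move/eqP: cKi => ->.
  by exists set0; rewrite !sub0set; split => //; exact: lin0.
have lt : i < n := lei; have mono := KP_mono HM lt.
case E: (nth (inl set0) W i) => [nu|[a b]].
  case: (fill_facts HM lt E) => nuKn nuK crit EK.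
  case: (boolP (nu \in c)) => nuc.
    exfalso.
    have X : lin ref (c :\ nu) \subset KP i.
      apply: lin_sub => s; rewrite in_setD1 => /andP[snu sc].
      apply: (ref_sub HK HM Href (ltnW lt)).
      by rewrite EK !inE snu (subsetP cKi).
    have : nu \in lin ref c.
      rewrite -(chain_add1D nuc) lin_add lin1 (Hc nu nuK crit) mem_chain_add.
      rewrite in_set1 eqxx /=; apply/negP => /(subsetP X).
      by rewrite EK !inE eqxx.
    by rewrite cref inE.
  have cKi' : c \subset KP i.
    apply/subsetP => s sc; rewrite EK !inE (subsetP cKi) // andbT.
    by apply: contraNneq nuc => <-.
  have [d [dK dd db]] := IH (ltnW lt) c cKi' cdim cbd cref.
  by exists d; split => //; exact: subset_trans dK mono.
case: (exp_facts HM lt E) => aKn bKn aK bK [ab cb inW EK fr].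
have upb : upper_regular W b by apply/existsP; exists a.
have hb : a \in bd1 K b by rewrite !inE aK ab /=; apply/eqP; move: cb; clear; lia.
have apos := complex_nonempty HK aK.
case: (boolP (b \in c)) => bc.
  exfalso.
  have : a \in bd K c.
    rewrite inE.
    have -> : [set s in c | a \in bd1 K s] = [set b].
      apply/setP => u; rewrite !inE; apply/idP/idP.
        case/andP => uc /and3P[_ au /eqP cu].
        case: (fr u (subsetP cKi u uc) au) => [eu|->//].
        by move: cu; rewrite eu; move: apos; clear; lia.
      by move/eqP => ->; rewrite bc /=; move: hb; rewrite !inE.
    by rewrite cards1.
  by rewrite cbd inE.
case: (boolP (a \in c)) => ac; last first.
  have cKi' : c \subset KP i.
    apply/subsetP => s sc; rewrite EK !inE (subsetP cKi) // andbT.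
    apply/norP; split; first by apply: contraNneq ac => <-.
    by apply: contraNneq bc => <-.
  have [d [dK dd db]] := IH (ltnW lt) c cKi' cdim cbd cref.
  by exists d; split => //; exact: subset_trans dK mono.
have adim : #|a| = p.+1.
  by move: (subsetP cdim a ac); rewrite /Kdim /Ksize inE => /andP[_ /eqP].
set c' := chain_add c (bd1 K b).
have c'Ki : c' \subset KP i.
  apply/subsetP => u; rewrite mem_chain_add.
  case uc: (u \in c); case ub: (u \in bd1 K b) => //= _.
    rewrite EK !inE (subsetP cKi) // andbT.
    apply/norP; split; first by apply/eqP => eua; rewrite eua hb in ub.
    by apply/eqP => eub; rewrite -eub uc in bc.
  by apply: (bd1_in HK HM lt E ub); apply/eqP => eua; rewrite eua ac in uc.
have c'dim : c' \subset Kdim K p.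
  apply: chain_add_sub cdim _; apply/subsetP => u.
  rewrite /Kdim /Ksize !inE => /and3P[uK _ /eqP cu]; rewrite uK /=.
  by apply/eqP; move: cu cb adim; clear; lia.
have c'bd : bd K c' = set0.
  by rewrite /c' /bd lin_add; move: (bdbd HK bK) cbd; rewrite /bd => -> ->; exact: chain_add00.
have c'ref : lin ref c' = set0.
  by rewrite /c' lin_add cref (Hu b bK upb).2 chain_add00.
have [d [dK dd db]] := IH (ltnW lt) c' c'Ki c'dim c'bd c'ref.
exists (chain_add d [set b]); split.
- by apply: chain_add_sub; [exact: subset_trans dK mono | rewrite sub1set].
- apply: chain_add_sub dd _; rewrite sub1set /Kdim /Ksize inE bK /=.
  by apply/eqP; move: cb adim; clear; lia.
- by rewrite /bd lin_add; move: db; rewrite /bd => ->; rewrite lin1 /c' chain_addK.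
Qed.

Lemma cohom_main coref p : is_coreference W K coref ->
  forall k j, j + k = n -> forall c : {set {set V}}, c \subset L K W j -> c \subset Kdim K p ->
  cobd K c = set0 -> lin coref c = set0 ->
  exists d : {set {set V}}, [/\ d \subset L K W j, d \subset Ksize K p & cobd K d = c].
Proof.
move=> Href; have [_ [Hc Hu]] := Href.
elim=> [|k IH] j ejk c cL cdim cbd cref.
  rewrite addn0 in ejk; move: cL; rewrite /L ejk (KPn HM) setDv subset0 => /eqP ->.
  by exists set0; rewrite !sub0set; split => //; exact: lin0.
have lt : j < n by move: ejk; clear; lia.
have ejk' : j.+1 + k = n by rewrite addSnnS.
have IH' := IH j.+1 ejk'.
have Lm := L_mono HM lt.
have inL : forall s, s \in c -> s \notin KP j.+1 -> s \in L K W j.+1.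
  by move=> s sc sn; move: (subsetP cL s sc); rewrite !inE sn => /andP[_ ->].
case E: (nth (inl set0) W j) => [nu|[a b]].
  case: (fill_facts HM lt E) => nuKn nuK crit EK.
  have notin : forall s, s \in c -> s != nu -> s \notin KP j.+1.
    move=> s sc snu; apply/negP => sKn.
    by move: (subsetP cL s sc); rewrite /L EK !inE snu sKn.
  case: (boolP (nu \in c)) => nuc.
    exfalso.
    have X : lin coref (c :\ nu) \subset L K W j.+1.
      apply: lin_sub => s; rewrite in_setD1 => /andP[snu sc].
      apply: (coref_sub HM Href ejk').
      exact: inL sc (notin s sc snu).
    have : nu \in lin coref c.
      rewrite -(chain_add1D nuc) lin_add lin1 (Hc nu nuK crit) mem_chain_add.
      rewrite in_set1 eqxx /=; apply/negP => /(subsetP X).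
      by rewrite !inE nuKn.
    by rewrite cref inE.
  have cL' : c \subset L K W j.+1.
    apply/subsetP => s sc.
    have snu : s != nu by apply: contraNneq nuc => <-.
    exact: inL sc (notin s sc snu).
  have [d [dK dd db]] := IH' c cL' cdim cbd cref.
  by exists d; split => //; exact: subset_trans dK Lm.
case: (exp_facts HM lt E) => aKn bKn aK bK [ab cb inW EK fr].
have lowa : lower_regular W a by apply/existsP; exists b.
have hb : b \in cobd1 K a by rewrite !inE bK ab /=; apply/eqP; move: cb; clear; lia.
have [Hcn _] := KP_step HM lt.
have notin : forall s, s \in c -> s != a -> s != b -> s \notin KP j.+1.
  move=> s sc sa sb; apply/negP => sKn.
  by move: (subsetP cL s sc); rewrite /L EK !inE (negbTE sa) (negbTE sb) sKn.
case: (boolP (a \in c)) => ac.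
  exfalso.
  have : b \in cobd K c.
    rewrite inE.
    have -> : [set s in c | b \in cobd1 K s] = [set a].
      apply/setP => u; rewrite !inE; apply/idP/idP.
        case/andP => uc /and3P[_ ub /eqP cu].
        have uK : u \in K by move: (subsetP cL u uc); rewrite inE => /andP[].
        have uKn : u \in KP j.+1.
          case: Hcn => _ Hcn; apply: Hcn bKn ub _.
          by rewrite -card_gt0; exact: complex_nonempty HK uK.
        apply/negP => ua.
        have ub' : u != b by apply/eqP => eub; move: cu; rewrite eub; clear; lia.
        by move: (notin u uc (introN idP ua) ub'); rewrite uKn.
      by move/eqP => ->; rewrite ac /=; move: hb; rewrite !inE.
    by rewrite cards1.
  by rewrite cbd inE.
case: (boolP (b \in c)) => bc; last first.
  have cL' : c \subset L K W j.+1.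
    apply/subsetP => s sc.
    have sa : s != a by apply: contraNneq ac => <-.
    have sb : s != b by apply: contraNneq bc => <-.
    exact: inL sc (notin s sc sa sb).
  have [d [dK dd db]] := IH' c cL' cdim cbd cref.
  by exists d; split => //; exact: subset_trans dK Lm.
have bdim : #|b| = p.+1.
  by move: (subsetP cdim b bc); rewrite /Kdim /Ksize inE => /andP[_ /eqP].
set c' := chain_add c (cobd1 K a).
have c'L : c' \subset L K W j.+1.
  apply/subsetP => u; rewrite mem_chain_add.
  case uc: (u \in c); case ub: (u \in cobd1 K a) => //= _.
    have ua : u != a by apply/eqP => eua; rewrite eua (negbTE ac) in uc.
    have ub2 : u != b by apply/eqP => eub; rewrite eub hb in ub.
    exact: inL uc (notin u uc ua ub2).
  have ub' : u != b by apply/eqP => eub; rewrite eub bc in uc.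
  rewrite inE (cobd1_in HM lt E ub ub').
  by move: ub; rewrite inE => /andP[->].
have c'dim : c' \subset Kdim K p.
  apply: chain_add_sub cdim _; apply/subsetP => u.
  rewrite /Kdim /Ksize !inE => /and3P[uK _ /eqP cu]; rewrite uK /=.
  by apply/eqP; move: cu cb bdim; clear; lia.
have c'bd : cobd K c' = set0.
  by rewrite /c' /cobd lin_add; move: (cobdcobd a HK) cbd; rewrite /cobd => -> ->; exact: chain_add00.
have c'ref : lin coref c' = set0.
  by rewrite /c' lin_add cref (Hu a aK lowa).2 chain_add00.
have [d [dK dd db]] := IH' c' c'L c'dim c'bd c'ref.
exists (chain_add d [set a]); split.
- apply: chain_add_sub; first exact: subset_trans dK Lm.
  by rewrite sub1set /L EK !inE aK eqxx.
- apply: chain_add_sub dd _; rewrite sub1set /Ksize inE aK /=.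
  by apply/eqP; move: cb bdim; clear; lia.
- by rewrite /cobd lin_add; move: db; rewrite /cobd => ->; rewrite lin1 /c' chain_addK.
Qed.

End Main.

Unset Implicit Arguments.

Theorem theorem8 (V : finType) (K : {set {set V}}) (W : seq (step V))
    (ref coref : {set V} -> {set {set V}}) (p : nat) :
  is_complex K -> Morse_seq W K ->
  is_reference W K ref -> is_coreference W K coref ->
  (forall z z' : {set {set V}}, Zp K p z -> Zp K p z' ->
     lin ref z = lin ref z' -> Bp K p (chain_add z z')) /\
  (forall z z' : {set {set V}}, coZp K p z -> coZp K p z' ->
     lin coref z = lin coref z' -> coBp K p (chain_add z z')).
Proof.
move=> HK HM Href Hcoref.
have dimK : Kdim K p \subset K.
  by apply/subsetP => s; rewrite inE => /andP[].
split.
- move=> z z' [zd zb] [z'd z'b] e.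
  have cd : chain_add z z' \subset Kdim K p by apply: chain_add_sub.
  split => //.
  have cK : chain_add z z' \subset Kpref W (size W).
    by rewrite (KPn HM); apply: subset_trans cd dimK.
  have cb : bd K (chain_add z z') = set0.
    by rewrite /bd lin_add; move: zb z'b; rewrite /bd => -> ->; exact: chain_addxx.
  have cr : lin ref (chain_add z z') = set0 by rewrite lin_add e chain_addxx.
  have [d [_ dd db]] := hom_main HK HM Href (leqnn _) cK cd cb cr.
  by exists d.
- move=> z z' [zd zb] [z'd z'b] e.
  have cd : chain_add z z' \subset Kdim K p by apply: chain_add_sub.
  split => //.
  have cL : chain_add z z' \subset L K W 0.
    by rewrite /L KP0 setD0; apply: subset_trans cd dimK.
  have cb : cobd K (chain_add z z') = set0.
    by rewrite /cobd lin_add; move: zb z'b; rewrite /cobd => -> ->; exact: chain_addxx.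
  have cr : lin coref (chain_add z z') = set0 by rewrite lin_add e chain_addxx.
  have [d [_ dd db]] := cohom_main HK HM Hcoref (add0n _) cL cd cb cr.
  by exists d.
Qed.
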